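(* Let $C>0$ and $Q\in\mathbb{N}$. There is a constant $C'>0$ depending only on $C$ and $Q$ such that for every image $I$ of width $w\geqslant2$ and every strip pattern set $\mathcal{L}$ of width $C$ and density $Q$ on $I$, $r(\mathcal{L})\leqslant C'w$.
   Context: Image: an image of width $w\geqslant2$ and height $h\geqslant1$ is a set of pixels identified with the integer points $(x,y)$, $x\in\{0,\dots,w-1\}$, $y\in\{0,\dots,h-1\}$. A pattern is a nonempty subset of the image; a pattern set is a nonempty set of distinct patterns. For a pattern set $\mathcal{T}$, $S(\mathcal{T})=|\mathcal{T}|\cdot|\bigcap_{T\in\mathcal{T}}T|$ and $r(\mathcal{T})=\max_{\varnothing\neq\mathcal{R}\subseteq\mathcal{T}}S(\mathcal{R})$. Strips: for a line $l$ and $C>0$, $s(l,C)=\{r\in\mathbb{R}^2\mid\rho(r,l)\leqslant C/2\}$, $\rho$ Euclidean distance. A line is mostly horizontal inclined to the right if it has equation $y=ax+b$ with $0\leqslant a\leqslant1$; it is integer at the image of width $w$ if $a=\frac{e}{w-1}$ for some $e\in\{0,\dots,w-1\}$. Patterns $T\in\mathcal{M}$ are $C$-parallel if there exist integer lines $l(T)$, $T\in\mathcal{M}$, all of the same slope, with $T\subset s(l(T),C)$ for all $T$. A pattern set $\mathcal{L}$ is a strip pattern set of width $C$ and density $Q$ if (1) every $L\in\mathcal{L}$ satisfies $L\subset s(l,C)$ for some integer line $l$, and (2) every $C$-parallel $\mathcal{M}\subseteq\mathcal{L}$ with $\bigcap_{L\in\mathcal{M}}L\neq\varnothing$ has $|\mathcal{M}|\leqslant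 Q$. *)

(* Defs.v *)
From HB Require Import structures.
From mathcomp Require Import all_boot all_order all_algebra.
From mathcomp Require Import reals.
Set Implicit Arguments. Unset Strict Implicit. Unset Printing Implicit Defensive.
Import Order.TTheory GRing.Theory Num.Theory.
Local Open Scope ring_scope.

Definition pixel (w h : nat) : finType := ('I_w * 'I_h)%type.

Section Defs.
Variable R : realType.

Definition dist_line (a b x y : R) : R :=
  `|y - a * x - b| / Num.sqrt (1 + a ^+ 2).

Definition int_slope (w e : nat) : R := e%:R / (w.-1)%:R.

Definition in_strip (w e : nat) (b C x y : R) : bool :=
  dist_line (int_slope w e) b x y <= C / 2.

Variables (w h : nat).

Definition pattern_in_strip (e : nat) (b C : R) (T : {set pixel w h}) : Prop :=
  forall p : pixel w h, p \in T ->
    in_strip w e b C (nat_of_ord p.1)%:R (nat_of_ord p.2)%:R.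

(* L ⊂ s(l, C) for some integer (mostly horizontal, right-inclined) line l *)
Definition in_some_strip (C : R) (T : {set pixel w h}) : Prop :=
  exists e : nat, (e < w)%N /\ exists b : R, pattern_in_strip e b C T.

Definition C_parallel (C : R) (M : {set {set pixel w h}}) : Prop :=
  exists e : nat, (e < w)%N /\
    exists bT : {set pixel w h} -> R,
      forall T, T \in M -> pattern_in_strip e (bT T) C T.

Definition pattern_set (L : {set {set pixel w h}}) : Prop :=
  L != set0 /\ forall T, T \in L -> T != set0.

Definition strip_pattern_set (C : R) (Q : nat) (L : {set {set pixel w h}}) : Prop :=
  (forall T, T \in L -> in_some_strip C T) /\
  (forall M : {set {set pixel w h}}, M \subset L -> C_parallel C M ->
     \bigcap_(T in M) T != set0 -> (#|M| <= Q)%N).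

End Defs.

Definition Sval (w h : nat) (T : {set {set pixel w h}}) : nat :=
  (#|T| * #|\bigcap_(P in T) P|)%N.

Definition rval (w h : nat) (T : {set {set pixel w h}}) : nat :=
  \max_(Rr in powerset T | Rr != set0) Sval Rr.

(* Main.v *)
Require Import Defs.
From HB Require Import structures.
From mathcomp Require Import all_boot all_order all_algebra.
From mathcomp Require Import reals boolp.
From mathcomp Require Import ring lra zify.
Import Order.TTheory GRing.Theory Num.Theory.
Local Open Scope ring_scope.

Section S.
Variable R : realType.

Lemma slope_bounds (w e : nat) : (2 <= w)%N -> (e < w)%N ->
  0 <= int_slope R w e <= 1.
Proof.
move=> w2 ew; rewrite /int_slope.
have wp : 0 < (w.-1)%:R :> R by rewrite ltr0n; lia.
apply/andP; split; first by rewrite divr_ge0.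
by rewrite ler_pdivrMr // mul1r ler_nat; lia.
Qed.

Lemma strip_bound (w e : nat) (b C x y : R) : (2 <= w)%N -> (e < w)%N ->
  0 < C -> in_strip w e b C x y -> `|y - int_slope R w e * x - b| <= C.
Proof.
move=> w2 ew C0; rewrite /in_strip /dist_line.
have /andP[a0 a1] := @slope_bounds w e w2 ew.
move: (int_slope R w e) a0 a1 => a a0 a1.
have sq0 : 0 < Num.sqrt (1 + a ^+ 2) by rewrite sqrtr_gt0; nra.
have sq2 : Num.sqrt (1 + a ^+ 2) <= 2.
  apply: (le_trans (y := Num.sqrt ((1 + a) ^+ 2))).
    apply: ler_wsqrtr. rewrite sqrrD expr1n. have : 0 <= a *+ 2 by rewrite mulrn_wge0. rewrite mul1r => h; rewrite -addrA lerD2l lerDr. exact h.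
  rewrite sqrtr_sqr ger0_norm; lra.
rewrite ler_pdivrMr //.
move=> H; apply: (le_trans H); nra.
Qed.

Lemma slope_diff (w e e' : nat) (b b' C xp yp xq yq : R) : (2 <= w)%N ->
  (e < w)%N -> (e' < w)%N -> 0 < C ->
  in_strip w e b C xp yp -> in_strip w e b C xq yq ->
  in_strip w e' b' C xp yp -> in_strip w e' b' C xq yq ->
  `|e%:R - e'%:R| * `|xq - xp| <= 4 * C * (w.-1)%:R.
Proof.
move=> w2 ew ew' C0 H1 H2 H3 H4.
have := @strip_bound w e b C _ _ w2 ew C0 H1; have := @strip_bound w e b C _ _ w2 ew C0 H2.
have := @strip_bound w e' b' C _ _ w2 ew' C0 H3; have := @strip_bound w e' b' C _ _ w2 ew' C0 H4.
rewrite /int_slope.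
have wp : 0 < (w.-1)%:R :> R by rewrite ltr0n; lia.
set a := e%:R / _; set a' := e'%:R / _.
have -> : e%:R - e'%:R = (a - a') * (w.-1)%:R.
  by rewrite /a /a' mulrBl !mulfVK // gt_eqF.
rewrite normrM (gtr0_norm wp) -mulrA [_ * `|xq - xp|]mulrC mulrA.
rewrite mulrA ler_pM2r //. clearbody a a'.
rewrite -normrM.
move=> /ler_normlP [h1 h2] /ler_normlP [h3 h4] /ler_normlP [h5 h6] /ler_normlP [h7 h8].
apply/ler_normlP; split; nra.
Qed.

Lemma modeq_small (a b N : nat) : (a <= b + N)%N -> (b <= a + N)%N ->
  (a %% N.+1)%N = (b %% N.+1)%N -> a = b.
Proof.
move=> h1 h2 h3.
have := divn_eq a N.+1; have := divn_eq b N.+1.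
rewrite h3. set r := (b %% N.+1)%N. set qa := (a %/ N.+1)%N. set qb := (b %/ N.+1)%N.
move=> eb ea.
have [hq|hq|hq] := ltngtP qa qb.
- have : (qa.+1 * N.+1 <= qb * N.+1)%N by rewrite leq_mul2r hq orbT.
  rewrite mulSn. lia.
- have : (qb.+1 * N.+1 <= qa * N.+1)%N by rewrite leq_mul2r hq orbT.
  rewrite mulSn. lia.
- by rewrite ea eb hq.
Qed.
End S.

Theorem lemma3 (R : realType) (C : R) (Q : nat) :
  0 < C ->
  exists C' : R, 0 < C' /\
    forall (w h : nat), (2 <= w)%N -> (1 <= h)%N ->
    forall L : {set {set pixel w h}},
      pattern_set L -> strip_pattern_set C Q L ->
      (rval L)%:R <= C' * w%:R.
Proof.
move=> C0.
pose N := Num.Def.archi_bound (2 * C).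
have HN : 2 * C < N%:R by apply: archi_boundP; lra.
have QN0 : 0 <= Q%:R * N.+1%:R * (4 * C + 2) :> R.
  by rewrite !mulr_ge0 //; lra.
exists (Q%:R * N.+1%:R * (4 * C + 2) + 1); split; first lra.
move=> w h w2 h1 L [L0 Lne] [Lstrip Ldens].
have w0 : (0 < w)%N by apply: ltnW.
have [f Hf] : {f : {set pixel w h} -> 'I_w * R &
    forall T, T \in L -> pattern_in_strip (f T).1 (f T).2 C T}.
  apply: (@choice {set pixel w h} ('I_w * R)%type (fun T y => T \in L -> pattern_in_strip (nat_of_ord y.1) y.2 C T)).
  move=> T; case: (boolP (T \in L)) => TL.
    have [e [ew [b Hb]]] := Lstrip T TL.
    by exists (Ordinal ew, b).
  by exists (Ordinal w0, 0).
have wR : 0 <= w%:R :> R by [].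
rewrite /rval.
apply: (big_ind (fun n : nat => n%:R <= (Q%:R * N.+1%:R * (4 * C + 2) + 1) * w%:R)).
- rewrite mulr_ge0 //; lra.
- move=> x y hx hy; rewrite /maxn; by case: ifP.
move=> Rr /andP[]; rewrite powersetE => RrL Rr0.

rewrite /Sval.
set I := \bigcap_(P in Rr) P.
case: (set_0Vmem I) => [-> | [p0 p0I]].
  by rewrite cards0 muln0 /= mulr_ge0 //; lra.
case: (set_0Vmem Rr) => [Rr0' | [T0 T0R]]; first by rewrite Rr0' eqxx in Rr0.
have RL : forall T, T \in Rr -> T \in L by move=> T; apply: (subsetP RrL).
have IT : forall p T, p \in I -> T \in Rr -> p \in T.
  by move=> p T /bigcapP pI TR; apply: pI.
have HS : forall p T, p \in I -> T \in Rr ->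
    in_strip w (f T).1 (f T).2 C (nat_of_ord p.1)%:R (nat_of_ord p.2)%:R.
  by move=> p T pI TR; apply: (Hf T (RL T TR)); apply: IT.
set G := [set (f T).1 | T in Rr].
have cardRr : (#|Rr| <= #|G| * Q)%N.
  rewrite -sum1_card (partition_big (fun T => (f T).1) (mem G)) /=; last first.
    by move=> T TR; apply: imset_f.
  rewrite -sum_nat_const; apply: leq_sum => e eG.
  have -> : (\sum_(i | (i \in Rr) && ((f i).1 == e)) 1 =
            #|[set T in Rr | (f T).1 == e]|)%N.
    by rewrite -sum1_card; apply: eq_bigl => T; rewrite inE.
  apply: Ldens.
  - by apply/subsetP => T; rewrite inE => /andP[TR _]; apply: RL.
  - exists (nat_of_ord e); split; first exact: ltn_ord.
    exists (fun T => (f T).2) => T; rewrite inE => /andP[TR /eqP <-].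
    by apply: Hf; apply: RL.
  - apply/set0Pn; exists p0; apply/bigcapP => T; rewrite inE => /andP[TR _].
    by apply: IT.

case: (arg_minnP (fun p : pixel w h => nat_of_ord p.1) p0I) => pm pmI pmP.
case: (arg_maxnP (fun p : pixel w h => nat_of_ord p.1) p0I) => pM pMI pMP.
set D := (nat_of_ord pM.1 - nat_of_ord pm.1)%N.
have pmM : (nat_of_ord pm.1 <= nat_of_ord pM.1)%N by apply: pmP.
have Dw : (D.+1 <= w)%N by have := ltn_ord pM.1; rewrite /D; lia.
have kb : (#|I| <= D.+1 * N.+1)%N.
  rewrite cardE.
  have := @uniq_leq_size _
    [seq (nat_of_ord p.1, (nat_of_ord p.2 %% N.+1)%N) | p <- enum I]
    [seq (x, r) | x <- iota (nat_of_ord pm.1) D.+1, r <- iota 0 N.+1].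
  rewrite size_map size_allpairs !size_iota; apply.
    rewrite map_inj_in_uniq ?enum_uniq // => p q; rewrite !mem_enum => pI qI [e1 e2].
    have g1 := @strip_bound R w _ _ C _ _ w2 (ltn_ord (f T0).1) C0 (HS p T0 pI T0R).
    have g2 := @strip_bound R w _ _ C _ _ w2 (ltn_ord (f T0).1) C0 (HS q T0 qI T0R).
    rewrite e1 in g1.
    move: g1 g2 => /ler_normlP [k1 k1'] /ler_normlP [k2 k2'].
    have y1 : (nat_of_ord p.2 <= nat_of_ord q.2 + N)%N.
      by rewrite -(ler_nat R) natrD; lra.
    have y2 : (nat_of_ord q.2 <= nat_of_ord p.2 + N)%N.
      by rewrite -(ler_nat R) natrD; lra.
    have e3 := @modeq_small _ _ _ y1 y2 e2.
    clear -e1 e3; move: p q e1 e3 => [px py] [qx qy] /= e1 e3.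
    by congr pair; apply: val_inj.
  move=> z /mapP [p pI ->]; apply: allpairs_f; rewrite mem_iota //.
  rewrite mem_enum in pI.
  have a1 : (nat_of_ord p.1 <= nat_of_ord pM.1)%N := pMP p pI.
  have a2 : (nat_of_ord pm.1 <= nat_of_ord p.1)%N := pmP p pI.
  by rewrite /D a2 /= addnS ltnS subnKC.
  by rewrite add0n ltn_mod.

have e0G : (f T0).1 \in G by apply: imset_f.
case: (arg_minnP (fun e : 'I_w => nat_of_ord e) e0G) => em emG emP.
case: (arg_maxnP (fun e : 'I_w => nat_of_ord e) e0G) => eM eMG eMP.
have emM : (nat_of_ord em <= nat_of_ord eM)%N by apply: emP.
set s := (nat_of_ord eM - nat_of_ord em)%N.
have gs : (#|G| <= s.+1)%N.
  rewrite cardE.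
  have := @uniq_leq_size _ [seq nat_of_ord e | e <- enum G] (iota (nat_of_ord em) s.+1).
  rewrite size_map size_iota; apply.
    by rewrite map_inj_uniq ?enum_uniq //; apply: val_inj.
  move=> zz /mapP [e eG ->]; rewrite mem_iota; rewrite mem_enum in eG.
  have a1 : (nat_of_ord e <= nat_of_ord eM)%N := eMP e eG.
  have a2 : (nat_of_ord em <= nat_of_ord e)%N := emP e eG.
  by rewrite /s a2 /= addnS ltnS subnKC.
have gw : (#|G| <= w)%N by have := max_card G; rewrite card_ord.
have sD : (s%:R * D%:R <= 4 * C * (w.-1)%:R :> R).
  case/imsetP: emG => T1 T1R eT1; case/imsetP: eMG => T2 T2R eT2.
  have := @slope_diff R w _ _ _ _ C _ _ _ _ w2 (ltn_ord (f T2).1) (ltn_ord (f T1).1) C0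
    (HS pm T2 pmI T2R) (HS pM T2 pMI T2R) (HS pm T1 pmI T1R) (HS pM T1 pMI T1R).
  rewrite /s /D eT1 eT2 -!natrB //; last by rewrite -eT1 -eT2.
  by rewrite !normr_nat.

have nb : ((#|Rr| * #|I|) <= (#|G| * D.+1) * (Q * N.+1))%N.
  by rewrite mulnACA; exact: leq_mul cardRr kb.
have gD : ((#|G| * D.+1)%:R <= 4 * C * (w.-1)%:R + 2 * w%:R :> R).
  have n1 : ((#|G| * D.+1) <= s * D + D + w)%N.
    rewrite mulnS addnC; apply: leq_add; last exact: gw.
    by apply: leq_trans (leq_mul gs (leqnn D)) _; rewrite mulSn addnC.
  apply: (le_trans (y := (s * D + D + w)%:R)); first by rewrite ler_nat.
  rewrite !natrD natrM.
  have : (D%:R <= w%:R :> R) by rewrite ler_nat; apply: ltnW.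
  lra.
have w1 : ((w.-1)%:R <= w%:R :> R) by rewrite ler_nat leq_pred.
apply: (le_trans (y := ((#|G| * D.+1) * (Q * N.+1))%:R)); first by rewrite ler_nat.
rewrite natrM (natrM _ Q).
set X := (#|G| * D.+1)%:R in gD *.
have Y0 : 0 <= Q%:R * N.+1%:R :> R by rewrite mulr_ge0.
set Y := Q%:R * N.+1%:R in Y0 *.
have h3 : X * Y <= (4 * C * w%:R + 2 * w%:R) * Y.
  apply: ler_wpM2r => //; apply: (le_trans gD).
  have : 4 * C * (w.-1)%:R <= 4 * C * w%:R by apply: ler_wpM2l => //; lra.
  lra.
apply: (le_trans h3).
have : (4 * C * w%:R + 2 * w%:R) * Y = Y * (4 * C + 2) * w%:R by ring.
rewrite /Y => ->. rewrite -/Y.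
rewrite mulrDl mul1r; lra.
Qed.
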